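(* Let $t$ be an odd prime and let $n$ be a nonnegative integer with $n\not\equiv 0\pmod t$. Then for every $0\leq i\leq t-1$, \[ M_t(i,t,n)=\frac{p_t(n)}{t},\qquad \overline{M}_t(i,t,n)=\frac{\overline{p}_t(n)}{t}\equiv 0\pmod 2,\qquad \hat{M}_t(i,t,n)=\frac{\hat{p}_t(n)}{t}. \] In particular, $p_t(n)\equiv \hat{p}_t(n)\equiv 0\pmod t$ and $\overline{p}_t(n)\equiv 0\pmod{2t}$.
   Context: An overpartition is a partition in which the first occurrence of each distinct part size may be overlined; a pod is a partition in which the odd parts are distinct. For a partition $\pi$ of any of these three kinds, $\ell(\pi)$ is its total number of parts (overlined and non-overlined, resp. odd and even). A $t$-colored partition (resp. overpartition, pod) of $n$ is a $t$-tuple $\overrightarrow{\pi}=(\pi_1,\dots,\pi_t)$ of ordinary partitions (resp. overpartitions, pods) whose parts sum in total to $n$; $p_t(n)$, $\overline{p}_t(n)$, $\hat{p}_t(n)$ denote the respective numbers. Define \[ r^{*}(\overrightarrow{\pi})=\sum_{k=1}^{(t-1)/2} k\bigl(\ell(\pi_k)-\ell(\pi_{t-k})\bigr). \] $M_t(i,t,n)$ (resp. $\overline{M}_t(i,t,n)$, $\hat{M}_t(i,t,n)$) denotes the number of $t$-colored partitions (resp. overpartitions, pods) of $n$ with $r^{*}$ congruent to $i$ modulo $t$. *)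

(* Defs.v *)
From mathcomp Require Import all_boot all_order all_algebra.
Set Implicit Arguments. Unset Strict Implicit. Unset Printing Implicit Defensive.
Import GRing.Theory Num.Theory.

(* One component (a partition / overpartition / pod of size <= n), encoded by
   multiplicities: for j : 'I_n, (c j).1 is the number of parts equal to j+1,
   and (c j).2 says whether (the first occurrence of) part size j+1 is
   overlined.  Every object of size <= n has exactly one such encoding
   (sizes, multiplicities are <= n). *)
Definition comp (n : nat) := {ffun 'I_n -> 'I_n.+1 * bool}.

Section Defs.
Variable n : nat.

Definition cweight (c : comp n) : nat := \sum_(j < n) j.+1 * (c j).1.
Definition clen (c : comp n) : nat := \sum_(j < n) (c j).1.

Definition is_part (c : comp n) : bool := [forall j, ~~ (c j).2].
Definition is_overpart (c : comp n) : bool :=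
  [forall j, (c j).2 ==> (0 < (c j).1)].
Definition is_pod (c : comp n) : bool :=
  is_part c && [forall j : 'I_n, odd j.+1 ==> ((c j).1 <= 1)].

Variable t : nat.

(* t-colored objects of total size n, each colour satisfying P.
   Colour k (1-based, as pi_k in the paper) is f (k-1). *)
Definition colored (P : pred (comp n)) : {set {ffun 'I_t -> comp n}} :=
  [set f : {ffun 'I_t -> comp n} |
     [forall k, P (f k)] && (\sum_(k < t) cweight (f k) == n)].

(* ell(pi_k) for 1-based k (0 if k is out of range) *)
Definition ellk (f : {ffun 'I_t -> comp n}) (k : nat) : nat :=
  \sum_(j < t | j.+1 == k) clen (f j).

Definition rstar (f : {ffun 'I_t -> comp n}) : int :=
  (\sum_(1 <= k < (t.-1)./2.+1)
     (k%:Z * ((ellk f k)%:Z - (ellk f (t - k))%:Z)))%R.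

Definition pcount (P : pred (comp n)) : nat := #|colored P|.

Definition Mcount (P : pred (comp n)) (i : nat) : nat :=
  #|[set f in colored P | ((rstar f %% (t%:Z)%R)%Z == (i%:Z)%R)]|.
End Defs.

(* Main.v *)
Require Import Defs.
From mathcomp Require Import all_boot all_order all_algebra zify.
Set Implicit Arguments. Unset Strict Implicit. Unset Printing Implicit Defensive.
Import GRing.Theory.

Notation FT t n := {ffun 'I_t -> Defs.comp n}.

Definition Lc t n (f : FT t n) (j : 'I_n) : nat := \sum_(c < t) (f c j).1.
Definition Scol t n (f : FT t n) (j : 'I_n) : nat := \sum_(c < t) c.+1 * (f c j).1.
Definition Sc t n (f : FT t n) : nat := \sum_(c < t) c.+1 * clen (f c).

Lemma tpos_of t (c : 'I_t) : 0 < t.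
Proof. exact: leq_ltn_trans (leq0n c) (ltn_ord c). Qed.

Definition rot t (d : nat) (c : 'I_t) : 'I_t := Ordinal (ltn_pmod (c + d) (tpos_of c)).

Lemma rot_inj t d : injective (@rot t d).
Proof.
move=> x y /(congr1 val) /= /eqP; rewrite eqn_modDr !modn_small // => /eqP xy.
exact: val_inj.
Qed.

Definition sh t n (m : 'I_n) (d : nat) (f : FT t n) : FT t n :=
  [ffun c => [ffun j => if j == m then f (rot d c) j else f c j]].

Lemma sum_rot t d (F : 'I_t -> nat) : \sum_(c < t) F (rot d c) = \sum_(c < t) F c.
Proof. by rewrite [RHS](reindex_inj (@rot_inj t d)). Qed.

Lemma Lc_sh t n m d (f : FT t n) j : Lc (sh m d f) j = Lc f j.
Proof.
rewrite /Lc; under eq_bigr => c _ do rewrite !ffunE.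
case: eqP => // ->; exact: (sum_rot d (fun c => (f c m).1)).
Qed.

Lemma weightE t n (f : FT t n) :
  \sum_(k < t) cweight (f k) = \sum_(j < n) j.+1 * Lc f j.
Proof.
rewrite /cweight exchange_big; apply: eq_bigr => j _; by rewrite /Lc big_distrr.
Qed.

Lemma ScE t n (f : FT t n) : Sc f = \sum_(j < n) Scol f j.
Proof.
rewrite /Sc /clen.
under eq_bigr => c _ do rewrite big_distrr.
by rewrite exchange_big.
Qed.

Lemma modn_sum_eq (I : finType) (F G : I -> nat) t :
  (forall i, F i %% t = G i %% t) -> (\sum_i F i) %% t = (\sum_i G i) %% t.
Proof.
move=> H; rewrite -modn_summ (eq_bigr (fun i => G i %% t)) ?modn_summ // => i _.
Qed.

Lemma Scol_sh_m t n m d (f : FT t n) :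
  (Scol (sh m d f) m + d * Lc f m) %% t = Scol f m %% t.
Proof.
rewrite -(Lc_sh m d f m) /Scol /Lc big_distrr -big_split /=.
under eq_bigr => c _ do rewrite !ffunE eqxx.
rewrite -(sum_rot d (fun c => c.+1 * (f c m).1)) /=.
apply: modn_sum_eq => c.
rewrite -mulnDl -modnMml /= -[in RHS]modnMml -[((c+d)%%t).+1]addn1 modnDml.
by rewrite addn1 addSn.
Qed.

Lemma Scol_sh_neq t n m d (f : FT t n) j : j != m -> Scol (sh m d f) j = Scol f j.
Proof.
move=> /negbTE jm; rewrite /Scol; apply: eq_bigr => c _; by rewrite !ffunE jm.
Qed.

Lemma Sc_sh t n m d (f : FT t n) :
  (Sc (sh m d f) + d * Lc f m) %% t = Sc f %% t.
Proof.
rewrite !ScE (bigD1 m) // [in RHS](bigD1 m) //.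
rewrite (eq_bigr (fun j => Scol f j)); last by move=> j; exact: Scol_sh_neq.
by rewrite addnAC -modnDml Scol_sh_m modnDml.
Qed.

Lemma sh_inj t n m d : injective (@sh t n m d).
Proof.
move=> f g H; apply/ffunP => c; apply/ffunP => j.
case: (eqVneq j m) => [->|jm].
  have := congr1 (fun h : FT t n => h (invF (@rot_inj t d) c) m) H.
  by rewrite !ffunE eqxx f_invF.
have := congr1 (fun h : FT t n => h c j) H.
by rewrite !ffunE (negbTE jm).
Qed.

Definition entryP n (P : pred (Defs.comp n)) :=
  exists Q : 'I_n -> 'I_n.+1 * bool -> bool, forall x, P x = [forall j, Q j (x j)].

Lemma sh_P t n (P : pred (Defs.comp n)) m d (f : FT t n) : entryP P ->
  (forall k, P (f k)) -> forall k, P (sh m d f k).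
Proof.
move=> [Q HQ] H k; rewrite HQ; apply/forallP => j; rewrite !ffunE.
case: (j == m).
  by have := H (rot d k); rewrite HQ => /forallP; apply.
by have := H k; rewrite HQ => /forallP; apply.
Qed.

Lemma part_entry n : entryP (@is_part n).
Proof. by exists (fun _ e => ~~ e.2). Qed.

Lemma over_entry n : entryP (@is_overpart n).
Proof. by exists (fun _ (e : 'I_n.+1 * bool) => e.2 ==> (0 < e.1)). Qed.

Lemma pod_entry n : entryP (@is_pod n).
Proof.
exists (fun j (e : 'I_n.+1 * bool) => ~~ e.2 && (odd (nat_of_ord j).+1 ==> (e.1 <= 1))) => x.
rewrite /is_pod /is_part; apply/andP/forallP => [[/forallP H1 /forallP H2] j|H].
  by rewrite H1 H2.
by split; apply/forallP => j; case/andP: (H j).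
Qed.

Lemma in_colored t n (P : pred (Defs.comp n)) (f : FT t n) :
  (f \in colored t P) = [forall k, P (f k)] && (\sum_(k < t) cweight (f k) == n).
Proof. by rewrite inE. Qed.

Definition mpick t n (f : FT t n) := [pick j : 'I_n | ~~ (t %| Lc f j)].
Definition dpick t (L : nat) : nat :=
  if [pick d : 'I_t | (d * L + 1) %% t == 0] is Some d then val d else 0.
Definition phi t n (f : FT t n) : FT t n :=
  if mpick f is Some j then sh j (dpick t (Lc f j)) f else f.

Lemma Lc_phi t n (f : FT t n) j : Lc (phi f) j = Lc f j.
Proof. rewrite /phi; case: mpick => // ?; exact: Lc_sh. Qed.

Lemma mpick_phi t n (f : FT t n) : mpick (phi f) = mpick f.
Proof. rewrite /mpick; apply: eq_pick => j /=; by rewrite Lc_phi. Qed.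

Lemma mpickP t n (f : FT t n) j : mpick f = Some j -> ~~ (t %| Lc f j).
Proof. rewrite /mpick; case: pickP => // j' H [<-]; exact: H. Qed.

Lemma mpick_some t n (f : FT t n) : ~~ (t %| n) ->
  \sum_(k < t) cweight (f k) = n -> exists j, mpick f = Some j.
Proof.
move=> nd w; rewrite /mpick; case: pickP => [j _|H]; first by exists j.
exfalso; move/negP: nd; apply; rewrite -w weightE; apply: dvdn_sum => j _.
apply: dvdn_mull; exact: (negbFE (H j)).
Qed.

Lemma dpickP t L : prime t -> ~~ (t %| L) -> (dpick t L * L + 1) %% t = 0.
Proof.
move=> pt nd; rewrite /dpick; case: pickP => [d /eqP //|H]; exfalso.
have tpos := prime_gt0 pt.
have: coprime t L by rewrite prime_coprime.
case/(coprimeP _ tpos) => [[u v]] /= huv.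
have e : v * L + 1 = u * t by lia.
have := H (Ordinal (ltn_pmod v tpos)); rewrite /=.
by rewrite -modnDml modnMml modnDml e modnMl.
Qed.

Lemma weight_sh t n m d (f : FT t n) :
  \sum_(k < t) cweight (sh m d f k) = \sum_(k < t) cweight (f k).
Proof. rewrite !weightE; apply: eq_bigr => j _; by rewrite Lc_sh. Qed.

Lemma phi_in t n (P : pred (Defs.comp n)) (f : FT t n) : entryP P -> ~~ (t %| n) ->
  f \in colored t P -> phi f \in colored t P.
Proof.
move=> eP nd; rewrite in_colored => /andP[/forallP HP /eqP w].
case: (mpick_some nd w) => j mj; rewrite /phi mj in_colored weight_sh w eqxx andbT.
apply/forallP; exact: sh_P.
Qed.

Lemma phi_S t n (P : pred (Defs.comp n)) (f : FT t n) : prime t -> ~~ (t %| n) ->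
  f \in colored t P -> Sc (phi f) %% t = (Sc f + 1) %% t.
Proof.
move=> pt nd; rewrite in_colored => /andP[_ /eqP w].
case: (mpick_some nd w) => j mj; rewrite /phi mj.
have := dpickP pt (mpickP mj); set d := dpick t (Lc f j) => H0.
rewrite -[in RHS]modnDml -(Sc_sh j d f) modnDml -addnA -modnDmr H0 addn0.
by [].
Qed.

Lemma phi_inj t n (P : pred (Defs.comp n)) : ~~ (t %| n) ->
  {in colored t P &, injective (@phi t n)}.
Proof.
move=> nd f g fX gX e.
have mfg : mpick f = mpick g by rewrite -mpick_phi e mpick_phi.
move: fX; rewrite in_colored => /andP[_ /eqP w].
case: (mpick_some nd w) => j mf.
have Lfg : Lc f j = Lc g j by rewrite -(Lc_phi f) e Lc_phi.
move: e; rewrite /phi -mfg mf Lfg; exact: sh_inj.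
Qed.

Definition Xs t n (P : pred (Defs.comp n)) (i : nat) :=
  [set f in colored t P | Sc f %% t == i].

Lemma Xs_le t n (P : pred (Defs.comp n)) i : prime t -> ~~ (t %| n) -> entryP P ->
  #|Xs t P i| <= #|Xs t P (i.+1 %% t)|.
Proof.
move=> pt nd eP.
rewrite -(card_in_imset (f := @phi t n)); last first.
  move=> f g /setIdP[fX _] /setIdP[gX _]; exact: (phi_inj nd fX gX).
apply: subset_leq_card; apply/subsetP => _ /imsetP[f + ->].
move=> /setIdP[fX /eqP fi]; apply/setIdP; split; first exact: phi_in.
by rewrite (phi_S pt nd fX) -modnDml fi addn1.
Qed.

Lemma cyc (N : nat -> nat) t : 0 < t -> (forall i, i < t -> N i <= N (i.+1 %% t)) ->
  forall i, i < t -> N i = N 0.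
Proof.
move=> tpos H.
have mono : forall i j, i <= j -> j < t -> N i <= N j.
  move=> i j; elim: j => [|j IH] ij jt; first by rewrite leqn0 in ij; rewrite (eqP ij).
  rewrite leq_eqVlt in ij; case/orP: ij => [/eqP -> //|ij].
  apply: leq_trans (IH ij (ltnW jt)) _.
  by have := H j (ltnW jt); rewrite modn_small.
move=> i it; apply/eqP; rewrite eqn_leq; apply/andP; split.
  apply: leq_trans (mono i t.-1 _ _) _; [lia | lia |].
  have tt : t.-1 < t by lia.
  by have := H t.-1 tt; rewrite prednK // modnn.
exact: mono.
Qed.

Lemma card_Xs t n (P : pred (Defs.comp n)) : 0 < t ->
  #|colored t P| = \sum_(i < t) #|Xs t P i|.
Proof.
move=> tpos.
rewrite -sum1_card (partition_big (fun f => Ordinal (ltn_pmod (Sc f) tpos)) xpredT) //=.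
apply: eq_bigr => i _; rewrite -sum1_card; apply: eq_bigl => f.
apply/andP/setIdP => -[a b]; split => //; move: b; by rewrite -val_eqE.
Qed.

Lemma rev_part (l : nat -> nat) t h : h < t ->
  \sum_(1 <= k < h.+1) (t - k) * l (t - k) = \sum_(t - h <= c < t) c * l c.
Proof.
elim: h => [|h IH] ht; first by rewrite !big_geq ?subn0.
rewrite big_nat_recr //= IH; last by lia.
rewrite (@big_ltn _ _ _ (t - h.+1)); last by lia.
have -> : (t - h.+1).+1 = t - h by lia.
by rewrite addnC.
Qed.

Lemma key (l : nat -> nat) t h : t = h.*2.+1 ->
 \sum_(1 <= c < t.+1) c * l c + \sum_(1 <= k < h.+1) k * l (t - k)
 = \sum_(1 <= k < h.+1) k * l k + t * (\sum_(1 <= k < h.+1) l (t - k) + l t).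
Proof.
move=> ht.
rewrite (@big_cat_nat _ _ _ h.+1) /=; [|lia|lia].
rewrite (@big_cat_nat _ _ _ t (h.+1)) /=; [|lia|lia].
rewrite big_nat1.
have e : t - h = h.+1 by lia.
have -> : \sum_(h.+1 <= c < t) c * l c = \sum_(t - h <= c < t) c * l c by rewrite e.
rewrite -rev_part; last by lia.
have RB : \sum_(1 <= k < h.+1) (t - k) * l (t - k) + \sum_(1 <= k < h.+1) k * l (t - k)
   = t * \sum_(1 <= k < h.+1) l (t - k).
  rewrite -big_split big_distrr /=; apply: eq_big_nat => k /andP[k1 kh].
  by rewrite -mulnDl subnK //; lia.
rewrite mulnDr -RB; lia.
Qed.

Lemma SellkE t n (f : FT t n) : Sc f = \sum_(1 <= k < t.+1) k * ellk f k.
Proof.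
rewrite big_add1 /= big_mkord /Sc; apply: eq_bigr => c _.
congr (_ * _); rewrite /ellk (eq_bigl (fun j => j == c)) ?big_pred1_eq // => j.
Qed.

Lemma rstar_mod t n (f : FT t n) : odd t -> (rstar f %% Posz t)%Z = Posz (Sc f %% t).
Proof.
move=> ot.
set h := t./2.
have ht : t = h.*2.+1 by rewrite -[LHS]odd_double_half ot add1n.
have hh : (t.-1)./2 = h by rewrite [in LHS]ht /= doubleK.
have K := key (ellk f) ht.
rewrite -SellkE in K.
rewrite /rstar hh.
set A := \sum_(1 <= k < h.+1) k * ellk f k.
set B := \sum_(1 <= k < h.+1) k * ellk f (t - k).
set C := \sum_(1 <= k < h.+1) ellk f (t - k) + ellk f t.
rewrite -/A -/B -/C in K.
have -> : (\sum_(1 <= k < h.+1) (Posz k * (Posz (ellk f k) - Posz (ellk f (t - k)))))%R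
   = (Posz A - Posz B)%R.
  have PS : forall (F : nat -> nat) a b,
      Posz (\sum_(a <= k < b) F k) = (\sum_(a <= k < b) Posz (F k))%R.
    by move=> F a b; exact: (big_morph _ PoszD (erefl (Posz 0))).
  rewrite /A /B !PS -sumrB; apply: eq_bigr => k _.
  by rewrite mulrBr !PoszM.
have -> : (Posz A - Posz B = (- Posz C) * Posz t + Posz (Sc f))%R.
  have KZ : Posz (Sc f + B) = Posz (A + t * C) by rewrite K.
  lia.
by rewrite modzMDl modz_nat.
Qed.

Definition ppick t n (f : FT t n) := [pick p : 'I_t * 'I_n | 0 < (f p.1 p.2).1].
Definition flip t n (p : 'I_t * 'I_n) (f : FT t n) : FT t n :=
  [ffun c => [ffun j => if (c == p.1) && (j == p.2) then ((f c j).1, ~~ (f c j).2)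
                        else f c j]].
Definition tau t n (f : FT t n) := if ppick f is Some p then flip p f else f.
Definition bitf t n (f : FT t n) := if ppick f is Some p then (f p.1 p.2).2 else false.

Lemma flip1 t n p (f : FT t n) c j : (flip p f c j).1 = (f c j).1.
Proof. rewrite !ffunE; by case: ifP. Qed.

Lemma tau1 t n (f : FT t n) c j : (tau f c j).1 = (f c j).1.
Proof. rewrite /tau; case: ppick => // p; exact: flip1. Qed.

Lemma ppick_tau t n (f : FT t n) : ppick (tau f) = ppick f.
Proof. rewrite /ppick; apply: eq_pick => p /=; by rewrite tau1. Qed.

Lemma ppickP t n (f : FT t n) p : ppick f = Some p -> 0 < (f p.1 p.2).1.
Proof. rewrite /ppick; case: pickP => // q Hq [<-]; exact: Hq. Qed.

Lemma tauK t n : involutive (@tau t n).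
Proof.
move=> f; rewrite {1}/tau ppick_tau /tau.
case: (ppick f) => [p|] //.
apply/ffunP => c; apply/ffunP => j; rewrite !ffunE.
case: ifP => H /=; last by rewrite H.
rewrite H /= negbK; by case: (f c j).
Qed.

Lemma bitf_tau t n (f : FT t n) : ppick f != None -> bitf (tau f) = ~~ bitf f.
Proof. rewrite /bitf ppick_tau /tau; case: ppick => // p _; by rewrite !ffunE !eqxx. Qed.

Lemma Sc_tau t n (f : FT t n) : Sc (tau f) = Sc f.
Proof.
rewrite /Sc /clen; apply: eq_bigr => c _; congr (_ * _); apply: eq_bigr => j _.
by rewrite tau1.
Qed.

Lemma weight_tau t n (f : FT t n) :
  \sum_(k < t) cweight (tau f k) = \sum_(k < t) cweight (f k).
Proof.
rewrite /cweight; apply: eq_bigr => c _; apply: eq_bigr => j _; by rewrite tau1.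
Qed.

Lemma tau_over t n (f : FT t n) : (forall k, is_overpart (f k)) ->
  forall k, is_overpart (tau f k).
Proof.
move=> H k; rewrite /tau; case E: ppick => [p|] //; apply/forallP => j; rewrite !ffunE.
case: ifP => [/andP[/eqP -> /eqP ->]|_] /=.
  by apply/implyP => _; exact: ppickP E.
exact: (forallP (H k) j).
Qed.

Lemma ppick_some t n (f : FT t n) : \sum_(k < t) cweight (f k) = n -> 0 < n ->
  ppick f != None.
Proof.
move=> w n0; rewrite /ppick; case: pickP => // H; exfalso.
move: n0; rewrite -w big1 // => k _; rewrite /cweight big1 // => j _.
have := H (k, j); rewrite /= lt0n => /negbFE/eqP ->; by rewrite muln0.
Qed.

Lemma even_Xs t n i : 0 < n -> ~~ odd #|Xs t (@is_overpart n) i|.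
Proof.
move=> n0.
set A := Xs t (@is_overpart n) i.
set B := [set f : FT t n | bitf f].
rewrite -(cardsID B A).
have tauA : forall f, f \in A -> tau f \in A.
  move=> f /setIdP[fX fi]; apply/setIdP; split; last by rewrite Sc_tau.
  move: fX; rewrite !in_colored weight_tau => /andP[/forallP H ->]; rewrite andbT.
  apply/forallP; exact: tau_over.
have nn : forall f, f \in A -> ppick f != None.
  move=> f /setIdP[]; rewrite in_colored => /andP[_ /eqP w] _; exact: ppick_some.
have le1 : #|A :&: B| <= #|A :\: B|.
  rewrite -(card_imset _ (can_inj (@tauK t n))); apply: subset_leq_card.
  apply/subsetP => _ /imsetP[f + ->].
  rewrite in_setI => /andP[fA fB]; rewrite in_setD tauA // andbT.
  move: fB; rewrite !inE bitf_tau ?nn //; by move=> ->.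
have le2 : #|A :\: B| <= #|A :&: B|.
  rewrite -(card_imset _ (can_inj (@tauK t n))); apply: subset_leq_card.
  apply/subsetP => _ /imsetP[f + ->].
  rewrite in_setD => /andP[fB fA]; rewrite in_setI tauA //=.
  move: fB; rewrite !inE bitf_tau ?nn //.
have e : #|A :&: B| = #|A :\: B| by apply/eqP; rewrite eqn_leq le1 le2.
by rewrite e addnn odd_double.
Qed.

Theorem theorem2p5 (t n : nat) :
  prime t -> odd t -> ~~ (t %| n) ->
  forall i : nat, i < t ->
    (Mcount t (@is_part n) i * t = pcount t (@is_part n))
    /\ (Mcount t (@is_overpart n) i * t = pcount t (@is_overpart n))
    /\ ~~ odd (Mcount t (@is_overpart n) i)
    /\ (Mcount t (@is_pod n) i * t = pcount t (@is_pod n))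
    /\ (t %| pcount t (@is_part n))
    /\ (t %| pcount t (@is_pod n))
    /\ (2 * t %| pcount t (@is_overpart n)).
Proof.
move=> pt ot nd i it.
have tpos := prime_gt0 pt.
have n0 : 0 < n by move: nd; case: n => //; rewrite dvdn0.
have MX : forall P : pred (Defs.comp n), Mcount t P i = #|Xs t P i|.
  move=> P; rewrite /Mcount; apply: eq_card => f.
  apply/setIdP/setIdP => -[a b]; split => //; move: b; by rewrite rstar_mod // eqz_nat.
have main : forall P : pred (Defs.comp n), entryP P -> Mcount t P i * t = pcount t P.
  move=> P eP; rewrite MX.
  have C := @cyc (fun j => #|Xs t P j|) t tpos (fun j _ => Xs_le j pt nd eP).
  rewrite /pcount (card_Xs _ tpos) (eq_bigr (fun _ => #|Xs t P 0|)); last first.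
    move=> j _; exact: C.
  by rewrite sum_nat_const card_ord (C i it) mulnC.
have h1 := main _ (@part_entry n).
have h2 := main _ (@over_entry n).
have h3 := main _ (@pod_entry n).
have h4 : ~~ odd (Mcount t (@is_overpart n) i) by rewrite MX; exact: even_Xs.
split; first exact: h1. split; first exact: h2. split; first exact: h4.
split; first exact: h3.
split; first by rewrite -h1 dvdn_mull.
split; first by rewrite -h3 dvdn_mull.
by rewrite -h2 dvdn_pmul2r // dvdn2.
Qed.
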